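(* Let $P$ be a term and $p,q$ interactions valid for $P$ such that $q$ is a permutation of $p$. Then $p\sim q$.
   Context: Fix a commutative semiring $\mathbb K$ and a countable set $\mathcal N$ of names. Polarities are $+,-$; $\neg$ exchanges them. An action is $u^\varepsilon(x)$ with $u,x\in\mathcal N$, $\varepsilon$ a polarity ($u$ is its subject; $x$ is bound in the continuation). Terms: $P,Q::=k\mid \alpha.P\mid \diamond P\mid P|Q\mid P\parallel Q\mid \nu x\,P$ with $k\in\mathbb K$. Terms are taken up to injective renaming of bound names and $\nu x\nu y P=\nu y\nu x P$, bound names being distinct from all other names. Positions are finite sequences of integers, $\iota.\kappa$ is concatenation, $\epsilon$ the empty position, ordered by the prefix order; two positions are independent if incomparable. Transition labels are visible labels $u^\varepsilon(x):\iota$ or internal labels $(\iota,\kappa)$; $\iota.a$ denotes $a$ with every position $\kappa$ replaced by $\iota.\kappa$. Transitions are generated by: $\alpha.P\xrightarrow{\alpha:\epsilon}\diamond P$; if $P\xrightarrow{a}P'$ then $\diamond P\xrightarrow{1.a}\diamond P'$, $P|Q\xrightarrow{1.a}P'|Q$, $Q|P\xrightarrow{2.a}Q|P'$, $P\parallel Q\xrightarrow{1.a}P'\parallel Q$, $Q\parallel P\xrightarrow{2.a}Q\parallel P'$, and $\nu x P\xrightarrow{a}\nu xP'$ if $x$ does not occur in $a$; if $P\xrightarrow{u^\varepsilon(x):\iota}P'$ and $Q\xrightarrow{u^{\neg\varepsilon}(y):\kappa}Q'$ then $P|Q\xrightarrow{(1.\iota,2.\kappa)}\nu x(P'|Q'[x/y])$.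 An interaction is a finite sequence of transition labels; it is valid for (an interaction of) $P$ if there are consecutive transitions from $P$ with these labels. Two labels are independent if every position occurring in one is independent of every position occurring in the other. Homotopy $\sim$ is the smallest congruence (for concatenation) on sequences of labels such that $ab\sim ba$ whenever $a,b$ are independent. *)

(* Defs.v *)
From mathcomp Require Import all_boot all_algebra.
From Stdlib Require Export Sorting.Permutation.

Set Implicit Arguments.
Unset Strict Implicit.
Unset Printing Implicit Defensive.

Definition name := nat.

Inductive polarity := Pos | Neg.
Definition neg (e : polarity) := match e with Pos => Neg | Neg => Pos end.

(* Terms over the semiring K.  [Act u e x P] is u^e(x).P, x bound in P;
   [Dia P] is the diamond, [Par] is |, [Dpar] is ||, [Nu x P] binds x. *)
Inductive term (K : Type) :=
| Const of K
| Act of name & polarity & name & term K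
| Dia of term K
| Par of term K & term K
| Dpar of term K & term K
| Nu of name & term K.

Arguments Const {K}.

Definition position := seq nat.
Definition indep_pos (i k : position) := ~~ prefix i k && ~~ prefix k i.

(* Labels: visible u^e(x):i, or internal (i,k). *)
Inductive label :=
| Vis of name & polarity & name & position
| Int of position & position.

Definition lpositions (a : label) : seq position :=
  match a with Vis _ _ _ i => [:: i] | Int i k => [:: i; k] end.

Definition lnames (a : label) : seq name :=
  match a with Vis u _ x _ => [:: u; x] | Int _ _ => [::] end.

Definition lshift (i : position) (a : label) : label :=
  match a with
  | Vis u e x k => Vis u e x (i ++ k)
  | Int k l => Int (i ++ k) (i ++ l)
  end.

Definition lbound (a : label) : option name :=
  match a with Vis _ _ x _ => Some x | Int _ _ => None end.

Section Syntax.
Variable K : Type.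

Fixpoint fn (P : term K) : seq name :=
  match P with
  | Const _ => [::]
  | Act u _ x P => u :: [seq n <- fn P | n != x]
  | Dia P => fn P
  | Par P Q | Dpar P Q => fn P ++ fn Q
  | Nu x P => [seq n <- fn P | n != x]
  end.

Fixpoint bn (P : term K) : seq name :=
  match P with
  | Const _ => [::]
  | Act _ _ x P => x :: bn P
  | Dia P => bn P
  | Par P Q | Dpar P Q => bn P ++ bn Q
  | Nu x P => x :: bn P
  end.

Definition names (P : term K) : seq name := fn P ++ bn P.

(* subst x y P = P[x/y]: replace the free occurrences of y by x
   (capture-avoiding whenever x is not a bound name of P, which is
   required wherever it is used). *)
Definition ren (x y n : name) : name := if n == y then x else n.

Fixpoint subst (x y : name) (P : term K) : term K :=
  match P with
  | Const k => Const k
  | Act u e z P => Act (ren x y u) e z (if z == y then P else subst x y P)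
  | Dia P => Dia (subst x y P)
  | Par P Q => Par (subst x y P) (subst x y Q)
  | Dpar P Q => Dpar (subst x y P) (subst x y Q)
  | Nu z P => Nu z (if z == y then P else subst x y P)
  end.

Inductive sc : term K -> term K -> Prop :=
| sc_refl P : sc P P
| sc_sym P Q : sc P Q -> sc Q P
| sc_trans P Q R : sc P Q -> sc Q R -> sc P R
| sc_alpha_act u e x z P : z \notin names P ->
    sc (Act u e x P) (Act u e z (subst z x P))
| sc_alpha_nu x z P : z \notin names P ->
    sc (Nu x P) (Nu z (subst z x P))
| sc_nu_swap x y P : sc (Nu x (Nu y P)) (Nu y (Nu x P))
| sc_act u e x P P' : sc P P' -> sc (Act u e x P) (Act u e x P')
| sc_dia P P' : sc P P' -> sc (Dia P) (Dia P')
| sc_par P P' Q Q' : sc P P' -> sc Q Q' -> sc (Par P Q) (Par P' Q')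
| sc_dpar P P' Q Q' : sc P P' -> sc Q Q' -> sc (Dpar P Q) (Dpar P' Q')
| sc_nu x P P' : sc P P' -> sc (Nu x P) (Nu x P').

(* freshness of the bound name of a label w.r.t. a term (Barendregt
   convention: the bound name of a label is distinct from other names) *)
Definition lfresh (a : label) (Q : term K) : Prop :=
  match lbound a with Some x => x \notin fn Q | None => True end.

(* Transition rules on representatives, the Barendregt convention being
   made explicit through freshness side conditions. *)
Inductive rstep : term K -> label -> term K -> Prop :=
| rs_act u e x P : x != u ->
    rstep (Act u e x P) (Vis u e x [::]) (Dia P)
| rs_dia P a P' : rstep P a P' ->
    rstep (Dia P) (lshift [:: 1] a) (Dia P')
| rs_parl P Q a P' : rstep P a P' -> lfresh a Q ->
    rstep (Par P Q) (lshift [:: 1] a) (Par P' Q)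
| rs_parr P Q a Q' : rstep Q a Q' -> lfresh a P ->
    rstep (Par P Q) (lshift [:: 2] a) (Par P Q')
| rs_dparl P Q a P' : rstep P a P' -> lfresh a Q ->
    rstep (Dpar P Q) (lshift [:: 1] a) (Dpar P' Q)
| rs_dparr P Q a Q' : rstep Q a Q' -> lfresh a P ->
    rstep (Dpar P Q) (lshift [:: 2] a) (Dpar P Q')
| rs_nu x P a P' : rstep P a P' -> x \notin lnames a ->
    rstep (Nu x P) a (Nu x P')
| rs_sync P Q P' Q' u e x y i k :
    rstep P (Vis u e x i) P' -> rstep Q (Vis u (neg e) y k) Q' ->
    x \notin fn Q -> x \notin bn Q' ->
    rstep (Par P Q) (Int (1 :: i) (2 :: k)) (Nu x (Par P' (subst x y Q'))).

Definition step (P : term K) (a : label) (P' : term K) : Prop :=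
  exists P0 P1, sc P P0 /\ rstep P0 a P1 /\ sc P1 P'.

Inductive valid : term K -> seq label -> Prop :=
| valid_nil P : valid P [::]
| valid_cons P a P' s : step P a P' -> valid P' s -> valid P (a :: s).

End Syntax.

Definition indep (a b : label) : Prop :=
  forall i k, i \in lpositions a -> k \in lpositions b -> indep_pos i k.

Inductive homotopic : seq label -> seq label -> Prop :=
| ho_refl s : homotopic s s
| ho_sym s t : homotopic s t -> homotopic t s
| ho_trans s t r : homotopic s t -> homotopic t r -> homotopic s r
| ho_swap s t a b : indep a b -> homotopic (s ++ a :: b :: t) (s ++ b :: a :: t).

(* Main.v *)
Require Import Defs.
From mathcomp Require Import all_boot all_algebra.
Set Implicit Arguments.

Section Apos.
Variable K : Type.

Fixpoint apos (P : term K) : seq position :=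
  match P with
  | Const _ => [::]
  | Act _ _ _ P => [::] :: map (cons 1) (apos P)
  | Dia P => map (cons 1) (apos P)
  | Par P Q | Dpar P Q => map (cons 1) (apos P) ++ map (cons 2) (apos Q)
  | Nu _ P => apos P
  end.

Lemma apos_subst x y (P : term K) : apos (subst x y P) = apos P.
Proof.
elim: P => //= [u e z P IH|P IH|P IHP Q IHQ|P IHP Q IHQ|z P IH].
- by case: (z == y); rewrite ?IH.
- by rewrite IH.
- by rewrite IHP IHQ.
- by rewrite IHP IHQ.
- by case: (z == y); rewrite ?IH.
Qed.

Lemma apos_sc (P Q : term K) : sc P Q -> apos P = apos Q.
Proof.
induction 1; simpl; rewrite ?apos_subst; congruence.
Qed.

Lemma in_mapcons (n : nat) j (s : seq position) :
  (n :: j \in map (cons n) s) = (j \in s).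
Proof. by apply: mem_map => a b [] . Qed.

Lemma mapcons_inv (n : nat) j (s : seq position) :
  j \in map (cons n) s -> exists2 j', j = n :: j' & j' \in s.
Proof. by case/mapP => j' H ->; exists j'. Qed.

Lemma rstep_R1 (P : term K) a P' : rstep P a P' ->
  forall i, i \in lpositions a -> i \in apos P.
Proof.
elim => {P a P'} /=.
- by move=> u e x P _ i; rewrite inE => /eqP ->; rewrite inE eqxx.
- move=> P [u e x k|k l] P' _ IH i /=.
    by rewrite inE => /eqP ->; rewrite in_mapcons; apply: IH; rewrite inE.
  by rewrite !inE => /orP [] /eqP ->; rewrite in_mapcons; apply: IH; rewrite !inE eqxx ?orbT.
- move=> P Q [u e x k|k l] P' _ IH _ i /=; rewrite mem_cat.
    by rewrite inE => /eqP ->; rewrite in_mapcons IH // inE.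
  by rewrite !inE => /orP [] /eqP ->; rewrite in_mapcons IH // !inE eqxx ?orbT.
- move=> P Q [u e x k|k l] Q' _ IH _ i /=; rewrite mem_cat.
    by rewrite inE => /eqP ->; rewrite in_mapcons IH ?orbT // inE.
  by rewrite !inE => /orP [] /eqP ->; rewrite in_mapcons IH ?orbT // !inE eqxx ?orbT.
- move=> P Q [u e x k|k l] P' _ IH _ i /=; rewrite mem_cat.
    by rewrite inE => /eqP ->; rewrite in_mapcons IH // inE.
  by rewrite !inE => /orP [] /eqP ->; rewrite in_mapcons IH // !inE eqxx ?orbT.
- move=> P Q [u e x k|k l] Q' _ IH _ i /=; rewrite mem_cat.
    by rewrite inE => /eqP ->; rewrite in_mapcons IH ?orbT // inE.
  by rewrite !inE => /orP [] /eqP ->; rewrite in_mapcons IH ?orbT // !inE eqxx ?orbT.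
- by move=> x P a P' _ IH _.
- move=> P Q P' Q' u e x y i k _ IHP _ IHQ _ _ j.
  rewrite !inE mem_cat => /orP [] /eqP ->; rewrite in_mapcons.
    by rewrite IHP // inE.
  by rewrite IHQ ?orbT // inE.
Qed.

Lemma rstep_R2 (P : term K) a P' : rstep P a P' ->
  forall j, j \in apos P' -> j \in apos P.
Proof.
elim => {P a P'} /=.
- by move=> u e x P _ j H; rewrite inE H orbT.
- move=> P a P' _ IH j /mapcons_inv [j' -> H]; rewrite in_mapcons; exact: IH.
- move=> P Q a P' _ IH _ j; rewrite !mem_cat => /orP [/mapcons_inv [j' -> H]|->].
    by rewrite in_mapcons IH.
  by rewrite orbT.
- move=> P Q a Q' _ IH _ j; rewrite !mem_cat => /orP [->|/mapcons_inv [j' -> H]] //.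
  by rewrite in_mapcons IH ?orbT.
- move=> P Q a P' _ IH _ j; rewrite !mem_cat => /orP [/mapcons_inv [j' -> H]|->].
    by rewrite in_mapcons IH.
  by rewrite orbT.
- move=> P Q a Q' _ IH _ j; rewrite !mem_cat => /orP [->|/mapcons_inv [j' -> H]] //.
  by rewrite in_mapcons IH ?orbT.
- by move=> x P a P' _ IH _.
- move=> P Q P' Q' u e x y i k _ IHP _ IHQ _ _ j.
  rewrite apos_subst !mem_cat => /orP [/mapcons_inv [j' -> H]|/mapcons_inv [j' -> H]];
    rewrite in_mapcons ?IHP ?IHQ ?orbT //.
Qed.

Lemma rstep_R3 (P : term K) a P' : rstep P a P' ->
  forall i j, i \in lpositions a -> j \in apos P' -> ~~ prefix j i.
Proof.
elim => {P a P'} /=.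
- move=> u e x P _ i j; rewrite inE => /eqP -> /mapcons_inv [j' -> _] //.
- move=> P [u e x k|k l] P' _ IH i j /= Hi /mapcons_inv [j' -> H].
    move: Hi; rewrite inE => /eqP ->; rewrite prefix_cons eqxx /=; apply: IH H.
    by rewrite inE.
  move: Hi; rewrite !inE => /orP [] /eqP ->; rewrite prefix_cons eqxx /=; apply: IH H;
    by rewrite !inE eqxx ?orbT.
- move=> P Q [u e x k|k l] P' _ IH _ i j /= Hi;
    rewrite mem_cat => /orP [/mapcons_inv [j' -> H]|/mapcons_inv [j' -> H]].
  + move: Hi; rewrite inE => /eqP ->; rewrite prefix_cons eqxx /=; apply: IH H.
    by rewrite inE.
  + by move: Hi; rewrite inE => /eqP ->.
  + move: Hi; rewrite !inE => /orP [] /eqP ->; rewrite prefix_cons eqxx /=; apply: IH H;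
      by rewrite !inE eqxx ?orbT.
  + by move: Hi; rewrite !inE => /orP [] /eqP ->.
- move=> P Q [u e x k|k l] Q' _ IH _ i j /= Hi;
    rewrite mem_cat => /orP [/mapcons_inv [j' -> H]|/mapcons_inv [j' -> H]].
  + by move: Hi; rewrite inE => /eqP ->.
  + move: Hi; rewrite inE => /eqP ->; rewrite prefix_cons eqxx /=; apply: IH H.
    by rewrite inE.
  + by move: Hi; rewrite !inE => /orP [] /eqP ->.
  + move: Hi; rewrite !inE => /orP [] /eqP ->; rewrite prefix_cons eqxx /=; apply: IH H;
      by rewrite !inE eqxx ?orbT.
- move=> P Q [u e x k|k l] P' _ IH _ i j /= Hi;
    rewrite mem_cat => /orP [/mapcons_inv [j' -> H]|/mapcons_inv [j' -> H]].
  + move: Hi; rewrite inE => /eqP ->; rewrite prefix_cons eqxx /=; apply: IH H.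
    by rewrite inE.
  + by move: Hi; rewrite inE => /eqP ->.
  + move: Hi; rewrite !inE => /orP [] /eqP ->; rewrite prefix_cons eqxx /=; apply: IH H;
      by rewrite !inE eqxx ?orbT.
  + by move: Hi; rewrite !inE => /orP [] /eqP ->.
- move=> P Q [u e x k|k l] Q' _ IH _ i j /= Hi;
    rewrite mem_cat => /orP [/mapcons_inv [j' -> H]|/mapcons_inv [j' -> H]].
  + by move: Hi; rewrite inE => /eqP ->.
  + move: Hi; rewrite inE => /eqP ->; rewrite prefix_cons eqxx /=; apply: IH H.
    by rewrite inE.
  + by move: Hi; rewrite !inE => /orP [] /eqP ->.
  + move=> {}; move: Hi; rewrite !inE => /orP [] /eqP ->; rewrite prefix_cons eqxx /=; apply: IH H;
      by rewrite !inE eqxx ?orbT.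
- by move=> x P a P' _ IH _.
- move=> P Q P' Q' u e x y i k _ IHP _ IHQ _ _ i0 j Hi.
  rewrite apos_subst mem_cat => /orP [/mapcons_inv [j' -> H]|/mapcons_inv [j' -> H]];
    move: Hi; rewrite !inE => /orP [] /eqP -> //; rewrite prefix_cons eqxx /=.
  + by apply: IHP H; rewrite inE.
  + by apply: IHQ H; rewrite inE.
Qed.

Lemma valid_pos (P : term K) s : valid P s ->
  forall b k, List.In b s -> k \in lpositions b -> k \in apos P.
Proof.
elim => {P s} // P a P' s [P0 [P1 [H0 [H1 H2]]]] _ IH b k /= [<-|Hb] Hk.
  by rewrite (apos_sc H0); apply: rstep_R1 H1 _ Hk.
rewrite (apos_sc H0); apply: rstep_R2 H1 _ _.
by rewrite (apos_sc H2); apply: IH Hb Hk.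
Qed.

End Apos.

Fixpoint cons_ok (s : seq label) : Prop :=
  match s with
  | [::] => True
  | a :: s' => (forall b i k, List.In b s' -> i \in lpositions a ->
                 k \in lpositions b -> ~~ prefix k i) /\ cons_ok s'
  end.

Lemma valid_ok (K : Type) (P : term K) s : valid P s -> cons_ok s.
Proof.
elim => {P s} //= P a P' s [P0 [P1 [H0 [H1 H2]]]] V IH; split => // b i k Hb Hi Hk.
apply: (rstep_R3 H1 i k Hi).
by rewrite (apos_sc H2); apply: valid_pos V _ _ Hb Hk.
Qed.

Lemma ok_del q1 a q2 : cons_ok (q1 ++ a :: q2) -> cons_ok (q1 ++ q2).
Proof.
elim: q1 => [|c q1 IH] /=; first by case.
case=> H1 H2; split; last exact: IH.
move=> b i k Hb; apply: H1.
by apply List.in_or_app; case: (List.in_app_or _ _ _ Hb) => ?; [left|right; right].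
Qed.

Lemma lpos_ne a : exists i, i \in lpositions a.
Proof. by case: a => [u e x k|k l]; exists k; rewrite inE eqxx. Qed.

Lemma ho_cons a s t : homotopic s t -> homotopic (a :: s) (a :: t).
Proof.
elim => {s t}.
- by move=> s; apply: ho_refl.
- by move=> s t _ H; apply: ho_sym.
- by move=> s t r _ H1 _ H2; apply: ho_trans H2.
- by move=> s t b c H; apply: (ho_swap (a :: s) t H).
Qed.

Lemma ho_move a q1 : (forall b, List.In b q1 -> indep b a) ->
  forall s t, homotopic (s ++ q1 ++ a :: t) (s ++ a :: q1 ++ t).
Proof.
elim: q1 => [|b q1 IH] Hi s t /=; first exact: ho_refl.
have H : homotopic (rcons s b ++ q1 ++ a :: t) (rcons s b ++ a :: q1 ++ t).
  by apply: IH => c Hc; apply: Hi; right.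
rewrite -!cats1 -!catA /= in H.
apply: ho_trans H _.
by apply: ho_swap; apply: Hi; left.
Qed.

Lemma ok_before q1 a q2 b i k : cons_ok (q1 ++ a :: q2) -> List.In b q1 ->
  i \in lpositions b -> k \in lpositions a -> ~~ prefix k i.
Proof.
elim: q1 => [|c q1 IHq] //= [H1 H2] [<-|Hb] Hi Hk.
  by apply: (H1 a) => //; apply List.in_or_app; right; left.
exact: IHq H2 Hb Hi Hk.
Qed.

Lemma ok_perm p q : cons_ok p -> cons_ok q -> Permutation p q -> homotopic p q.
Proof.
elim: p q => [|a p IH] q Hp Hq Hpq.
  by rewrite (Permutation_nil Hpq); apply: ho_refl.
have Ha : List.In a q by apply: (Permutation_in a Hpq); left.
case: (List.in_split _ _ Ha) => q1 [q2 Eq].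
subst q.
have Hp' : Permutation p (q1 ++ q2) by apply: Permutation_cons_app_inv Hpq.
suff Hind : forall b, List.In b q1 -> indep b a.
  have Hm := @ho_move a q1 Hind [::] q2; rewrite /= in Hm.
  apply: ho_trans (ho_sym Hm).
  apply: ho_cons; apply: IH => //; first by case: Hp.
  exact: ok_del Hq.
move=> b Hb i k Hi Hk.
have nki : ~~ prefix k i.
  exact: ok_before Hq Hb Hi Hk.
have : List.In b (a :: p).
  by apply: (Permutation_in b (Permutation_sym Hpq)); apply List.in_or_app; left.
case=> [Eb|Hbp].
  by subst b; move: (@ok_before q1 a q2 a k k Hq Hb Hk Hk); rewrite prefix_refl.
have nik : ~~ prefix i k by case: Hp => H1 _; exact: (H1 b k i Hbp Hk Hi).
by rewrite /indep_pos nik nki.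
Qed.

Theorem proposition2p7 (K : comPzSemiRingType) (P : term K) (p q : seq label) :
  valid P p -> valid P q -> Permutation p q -> homotopic p q.
Proof.
move=> Vp Vq H; apply: ok_perm H; [exact: valid_ok Vp|exact: valid_ok Vq].
Qed.
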